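(* Let $L=\{0,1,\dots,m\}^n$ ordered componentwise, with bottom $\bot=(0,\dots,0)$. For each $i\in\{1,\dots,n\}$ let $f_i:L\to L$ be monotone and inflationary. Consider a non-interleaving execution with update-only-on-change starting from $G_0=\bot$, in which at each round $t$ a scheduler selects $S_t\subseteq\{1,\dots,n\}$ and $G_{t+1}$ is any committed state reachable by the concurrent execution of $\{f_i: i\in S_t\}$ from $G_t$. Assume the scheduler is fair: each index $i$ belongs to $S_t$ for infinitely many $t$. Then there exists $T$ with $G_t=G^*$ for all $t\ge T$, and $G^*$ is the least common fixed point of $\{f_1,\dots,f_n\}$.
   Context: Non-interleaving execution with update-only-on-change: execution proceeds in rounds $t=0,1,2,\dots$ with committed states $G_t\in L$. In round $t$ each $f_i$, $i\in S_t$, is executed concurrently on shared memory: process $i$ reads a vector $X\in L$, where each coordinate $X[k]$ is read at some time during the round and returns either $G_t[k]$ or the value of some write to coordinate $k$ performed during the round (reads and writes overlapping arbitrarily; no memory consistency guarantee). Process $i$ computes $H=f_i(X)$ and, for each coordinate $k$, issues a write of $H[k]$ to coordinate $k$ if and only if $H[k]\neq X[k]$. When several writes to the same coordinate occur, the final value is the value of one of them (last writer wins in an arbitrary order). At the end of the round, $G_{t+1}[k]=G_t[k]$ if no write to coordinate $k$ occurred, and otherwise $G_{t+1}[k]$ equals the value of one of the writes to coordinate $k$ during the round. A function $f$ is inflationary if $f(G)\ge G$ for all $G$, monotone if $G\le H\Rightarrow f(G)\le f(H)$. The least common fixed point is the least $G\in L$ with $f_i(G)=G$ for all $i$. *)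

(* Defs.v *)
From mathcomp Require Import all_boot.
Set Implicit Arguments. Unset Strict Implicit. Unset Printing Implicit Defensive.

Definition L (m n : nat) := {ffun 'I_n -> 'I_m.+1}.

Definition leL (m n : nat) (G H : L m n) : Prop := forall k : 'I_n, G k <= H k.

Definition botL (m n : nat) : L m n := [ffun => ord0].

Definition monotone (m n : nat) (f : L m n -> L m n) : Prop :=
  forall G H, leL G H -> leL (f G) (f H).

Definition inflationary (m n : nat) (f : L m n -> L m n) : Prop :=
  forall G, leL G (f G).

Definition least_common_fixed_point (m n : nat) (f : 'I_n -> L m n -> L m n)
  (Gs : L m n) : Prop :=
  (forall i, f i Gs = Gs) /\
  (forall H, (forall i, f i H = H) -> leL Gs H).

(* One round of non-interleaving execution with update-only-on-change:
   G' is a committed state reachable from G by concurrently executing the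
   f_i, i \in S.
   - X i is the vector read by process i; rt i k is the time at which its
     read of coordinate k completes; wt i k is the time at which its write to
     coordinate k (if issued) starts.  A process issues its writes only after
     it has read X and computed H = f i (X i) (rt i k' < wt i k).
   - Each read X i k returns either the committed value G k or the value of
     some write to coordinate k performed during the round by a process
     j \in S (i.e. f j (X j) k != X j k), which started before the read
     completed (wt j k < rt i k).
   - The committed value of coordinate k is G k if no write to k occurred,
     and otherwise the value of one of the writes to k. *)
Definition round (m n : nat) (f : 'I_n -> L m n -> L m n) (S : {set 'I_n})
  (G G' : L m n) : Prop :=
  exists (X : 'I_n -> L m n) (rt wt : 'I_n -> 'I_n -> nat),
    (forall i k k', rt i k' < wt i k) /\
    (forall i, i \in S -> forall k,
        X i k = G k \/
        exists2 j, j \in S &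
          [/\ f j (X j) k != X j k, X i k = f j (X j) k & wt j k < rt i k]) /\
    (forall k,
        ((forall j, j \in S -> f j (X j) k = X j k) /\ G' k = G k) \/
        exists2 j, j \in S & (f j (X j) k != X j k /\ G' k = f j (X j) k)).

(* Main.v *)
From Stdlib Require Import Classical.
Require Import Defs.
From mathcomp Require Import all_boot.
From mathcomp Require Import zify.

Lemma X_ge m n (f : 'I_n -> L m n -> L m n) (f_infl : forall i, inflationary (f i))
  (S : {set 'I_n}) (G : L m n) (X : 'I_n -> L m n) (rt wt : 'I_n -> 'I_n -> nat)
  (Hrw : forall i k k', rt i k' < wt i k)
  (HX : forall i, i \in S -> forall k, X i k = G k \/ exists2 j, j \in S &
          [/\ f j (X j) k != X j k, X i k = f j (X j) k & wt j k < rt i k]) :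
  forall N i k, i \in S -> rt i k < N -> G k <= X i k.
Proof.
elim=> [//|N IH] i k iS lt.
case: (HX i iS k) => [-> //| [j jS [_ -> lt2]]].
apply: leq_trans (f_infl j (X j) k).
apply: (IH j k jS). have := Hrw j k k. lia.
Qed.

Lemma X_le m n (f : 'I_n -> L m n -> L m n) (f_mono : forall i, monotone (f i))
  (S : {set 'I_n}) (G H : L m n) (X : 'I_n -> L m n) (rt wt : 'I_n -> 'I_n -> nat)
  (fixH : forall i, f i H = H) (GH : leL G H)
  (Hrw : forall i k k', rt i k' < wt i k)
  (HX : forall i, i \in S -> forall k, X i k = G k \/ exists2 j, j \in S &
          [/\ f j (X j) k != X j k, X i k = f j (X j) k & wt j k < rt i k]) :
  forall N i k, i \in S -> rt i k < N -> X i k <= H k.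
Proof.
elim=> [//|N IH] i k iS lt.
case: (HX i iS k) => [-> //| [j jS [_ -> lt2]]].
rewrite -(fixH j). apply: f_mono => k'.
apply: (IH j k' jS). have := Hrw j k k'. lia.
Qed.

Lemma round_props m n (f : 'I_n -> L m n -> L m n)
  (f_mono : forall i, monotone (f i))
  (f_infl : forall i, inflationary (f i)) S G G' :
  round f S G G' ->
  [/\ leL G G',
      (forall H, (forall i, f i H = H) -> leL G H -> leL G' H) &
      (G' = G -> forall i, i \in S -> f i G = G)].
Proof.
case=> X [rt [wt [Hrw [HX HG']]]].
have ge := @X_ge m n f f_infl S G X rt wt Hrw HX.
have wb : forall j k, j \in S -> f j (X j) k != X j k -> G k < f j (X j) k.
  move=> j k jS ne.
  have h1 := ge (rt j k).+1 j k jS (ltnSn _).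
  have h2 := f_infl j (X j) k.
  have h3 : (X j k : nat) != f j (X j) k.
    apply/eqP => e; move/eqP: ne; apply; apply/val_inj; by rewrite /= e.
  move: h1 h2 h3; lia.
split.
- move=> k; case: (HG' k) => [[_ ->] //| [j jS [ne ->]]].
  exact: ltnW (wb j k jS ne).
- move=> H fixH GH k.
  have le := @X_le m n f f_mono S G H X rt wt fixH GH Hrw HX.
  case: (HG' k) => [[_ ->] //| [j jS [ne ->]]].
  rewrite -(fixH j). apply: f_mono => k'.
  exact: (le (rt j k').+1 j k' jS (ltnSn _)).
- move=> eqG.
  have nw : forall j k, j \in S -> f j (X j) k = X j k.
    move=> j k jS; case: (eqVneq (f j (X j) k) (X j k)) => [//|ne].
    case: (HG' k) => [[all _]|[j' jS' [ne' e]]]; first by rewrite all.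
    have := wb j' k jS' ne'. rewrite -e eqG. lia.
  have XG : forall i, i \in S -> X i = G.
    move=> i iS; apply/ffunP => k.
    case: (HX i iS k) => [//|[j jS [ne _ _]]].
    by rewrite nw ?eqxx in ne.
  move=> i iS. rewrite -(XG i iS). apply/ffunP => k. exact: nw.
Qed.

Lemma stab (p : nat -> nat) B (mono : forall s t, s <= t -> p s <= p t)
  (bnd : forall t, p t <= B) :
  forall k s, B - p s <= k -> exists2 T, s <= T & forall t, T <= t -> p t = p T.
Proof.
elim=> [|k IH] s hs.
- exists s => // t st. have := mono s t st. have := bnd t. lia.
- case: (classic (forall t, s <= t -> p t = p s)) => [h|h].
  + by exists s.
  + have [t ht] := not_all_ex_not _ _ h.
    have [st ne] := imply_to_and _ _ ht.
    have hm := mono s t st. have hb := bnd t.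
    have [T tT HT] := IH t ltac:(lia).
    exists T => //. lia.
Qed.

Lemma sum_eq_le n (a b : 'I_n -> nat) : (forall k, a k <= b k) ->
  \sum_(k < n) a k = \sum_(k < n) b k -> forall k, a k = b k.
Proof.
move=> le e k. apply/eqP; rewrite eqn_leq le /=.
apply/negP => /negP; rewrite -ltnNge => lt.
move: e; rewrite (bigD1 k) //= [X in _ = X](bigD1 k) //=.
have h : \sum_(i < n | i != k) a i <= \sum_(i < n | i != k) b i by apply: leq_sum.
move=> e; have := leq_add lt h. by rewrite addSn e ltnn.
Qed.

Theorem theorem3 (m n : nat) (f : 'I_n -> L m n -> L m n)
  (f_mono : forall i, monotone (f i))
  (f_infl : forall i, inflationary (f i))
  (S : nat -> {set 'I_n}) (G : nat -> L m n)
  (G0 : G 0 = botL m n)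
  (Gstep : forall t, round f (S t) (G t) (G t.+1))
  (fair : forall (i : 'I_n) (t : nat), exists2 t', t <= t' & i \in S t') :
  exists T : nat, exists Gs : L m n,
    (forall t, T <= t -> G t = Gs) /\ least_common_fixed_point f Gs.
Proof.
have step := fun t => @round_props m n f f_mono f_infl _ _ _ (Gstep t).
have mono : forall t d, leL (G t) (G (t + d)).
  move=> t; elim=> [|d IH] k; first by rewrite addn0.
  apply: leq_trans (IH k) _. rewrite addnS. by case: (step (t + d)) => h _ _.
have bound : forall H, (forall i, f i H = H) -> forall t, leL (G t) H.
  move=> H fixH; elim=> [|t IH]; first by move=> k; rewrite G0 /botL ffunE.
  by case: (step t) => _ h _; apply: h.
pose p t := \sum_(k < n) (G t k : nat).
have pmono : forall s t, s <= t -> p s <= p t.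
  move=> s t st; rewrite -(subnKC st); apply: leq_sum => k _; exact: mono.
have pbnd : forall t, p t <= \sum_(k < n) m.
  move=> t; apply: leq_sum => k _. have := ltn_ord (G t k). lia.
have [T _ HT] := @stab p _ pmono pbnd _ 0 (leqnn _).
have GT : forall t, T <= t -> G t = G T.
  move=> t Tt. apply/ffunP => k. apply/val_inj => /=.
  rewrite -(subnKC Tt) in HT *.
  symmetry; apply: (@sum_eq_le n (fun k => G T k) (fun k => G (T + (t - T)) k)).
  - move=> k'; exact: mono.
  - by rewrite /p in HT; rewrite (HT (T + (t - T))) // leq_addr.
exists T, (G T); split => //; split.
- move=> i. have [t' Tt' it'] := fair i T.
  case: (step t') => _ _ h.
  rewrite -(GT t' Tt'). apply: h => //.
  by rewrite (GT t' Tt') GT // ltnW.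
- move=> H fixH; exact: bound.
Qed.
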